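(* Let $k \ge 0$, let $G_i$ and $G_j$ be two node-labeled graphs with node coloring $l$, and let $F^{(k)}$ be a function assigning to each node $v \in V(G_i) \cup V(G_j)$ a vector $F^{(k)}(v) \in \mathbb{R}^{d}$ such that for all nodes $u, v \in V(G_i) \cup V(G_j)$, $c_l^{(k)}(u)=c_l^{(k)}(v) \Longleftrightarrow F^{(k)}(u) = F^{(k)}(v)$. Let $f_G$ be a function mapping countable multisets of elements of $\mathbb{R}^d$ to $\mathbb{R}^{d_G}$, and define $F^{(k)}_G(G) = f_G(\{\!\{F^{(k)}(v) \mid v \in V(G)\}\!\})$. Put $\mathcal{A}=\{\!\{F^{(k)}(v) \mid v \in V(G_i)\}\!\}$ and $\mathcal{B}=\{\!\{F^{(k)}(v) \mid v \in V(G_j)\}\!\}$. If $$f_G(\mathcal{A}) = f_G(\mathcal{B}) \Longrightarrow \mathcal{A} = \mathcal{B},$$ then $$F^{(k)}_G(G_i)=F^{(k)}_G(G_j) \Longleftrightarrow C_l^{(k)}(G_i) = C_l^{(k)}(G_j).$$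
   Context: A graph $G=(V,E)$ has a finite node set $V$ and edges $E \subseteq \{\{u,v\} \subseteq V\}$; the neighborhood of $v$ is $N(v)=\{u \in V \mid \{v,u\} \in E\}$. A node coloring (labeling) is a function $l$ from nodes to a set of colors. Multisets are written $\{\!\{\dots\}\!\}$. 1-WL coloring: set $c_l^{(0)} = l$ and for $t>0$, $c_l^{(t)}(v) = \mathrm{HASH}\big(c_l^{(t-1)}(v), \{\!\{c_l^{(t-1)}(u) \mid u \in N(v)\}\!\}\big)$, where $\mathrm{HASH}$ is an injective map sending each such pair to a value not used in earlier iterations (the same map is used for all graphs considered). For a graph $G$, $C_l^{(t)}(G) = \{\!\{c_l^{(t)}(v) \mid v \in V(G)\}\!\}$. *)

(* Defs.v *)
From mathcomp Require Import all_boot all_order all_algebra.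
From mathcomp Require Import reals.
Set Implicit Arguments. Unset Strict Implicit. Unset Printing Implicit Defensive.

Record lgraph (C : Type) := LGraph {
  node : finType;
  adj : rel node;
  adj_sym : symmetric adj;
  adj_irr : irreflexive adj;
  lab : node -> C
}.

(* Multisets are represented as sequences up to permutation (perm_eq). *)

Definition hash_injective (C : eqType) (HASH : C -> seq C -> C) : Prop :=
  forall a b s s', HASH a s = HASH b s' <-> (a = b /\ perm_eq s s').

Fixpoint wl (C : eqType) (HASH : C -> seq C -> C) (G : lgraph C) (t : nat)
  : node G -> C :=
  match t with
  | 0 => @lab C G
  | t'.+1 => fun v => HASH (wl HASH t' v)
                          [seq wl HASH t' u | u <- enum (node G) & adj v u]
  end.
Arguments wl {C} HASH G t _.

Definition wl_multiset (C : eqType) (HASH : C -> seq C -> C) (G : lgraph C)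
  (t : nat) : seq C := [seq wl HASH G t v | v <- enum (node G)].

Definition multiset_fun (T U : eqType) (f : seq T -> U) : Prop :=
  forall s s', perm_eq s s' -> f s = f s'.

(* Main.v *)
Require Import Defs.
From mathcomp Require Import all_boot all_order all_algebra.
From mathcomp Require Import reals.

Lemma key_dir (T : finType) (X Y : eqType) (g : T -> X) (F : T -> Y)
  (H : forall u v, g u = g v -> F u = F v) (s t : seq T) :
  perm_eq (map g s) (map g t) -> perm_eq (map F s) (map F t).
Proof.
pose phi := fun c => omap F [pick u | g u == c].
have E : forall u, phi (g u) = Some (F u).
  move=> u; rewrite /phi; case: pickP => [u' /eqP Hu|/(_ u)]; last by rewrite eqxx.
  by rewrite /= (H _ _ Hu).
move=> P; apply: (@perm_map_inj _ _ Some (@Some_inj _)).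
rewrite -!map_comp.
have -> : [seq (Some \o F) i | i <- s] = [seq phi i | i <- map g s].
  by rewrite -map_comp; apply: eq_map => u /=; rewrite E.
have -> : [seq (Some \o F) i | i <- t] = [seq phi i | i <- map g t].
  by rewrite -map_comp; apply: eq_map => u /=; rewrite E.
exact: perm_map.
Qed.

Theorem proposition3p5 (R : realType) (C : eqType)
  (HASH : C -> seq C -> C) (HASH_inj : hash_injective HASH)
  (k d dG : nat) (Gi Gj : lgraph C)
  (F : (node Gi + node Gj)%type -> 'rV[R]_d)
  (HF : forall u v : (node Gi + node Gj)%type,
      (match u with inl x => wl HASH Gi k x | inr x => wl HASH Gj k x end =
       match v with inl x => wl HASH Gi k x | inr x => wl HASH Gj k x end)
      <-> F u = F v)
  (fG : seq 'rV[R]_d -> 'rV[R]_dG) (HfG : multiset_fun fG) :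
  let A := [seq F (inl v) | v <- enum (node Gi)] in
  let B := [seq F (inr v) | v <- enum (node Gj)] in
  (fG A = fG B -> perm_eq A B) ->
  (fG A = fG B <-> perm_eq (wl_multiset HASH Gi k) (wl_multiset HASH Gj k)).
Proof.
move=> A B Hinj.
pose g := fun u : (node Gi + node Gj)%type =>
  match u with inl x => wl HASH Gi k x | inr x => wl HASH Gj k x end.
pose s := [seq inl v | v <- enum (node Gi)] : seq (node Gi + node Gj)%type.
pose t := [seq inr v | v <- enum (node Gj)] : seq (node Gi + node Gj)%type.
have eA : A = map F s by rewrite /A /s -map_comp.
have eB : B = map F t by rewrite /B /t -map_comp.
have eWi : wl_multiset HASH Gi k = map g s by rewrite /wl_multiset /s -map_comp.
have eWj : wl_multiset HASH Gj k = map g t by rewrite /wl_multiset /t -map_comp.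
rewrite eWi eWj; split.
- move=> /Hinj; rewrite eA eB; apply: key_dir => u v; exact: (proj2 (HF u v)).
- move=> P; apply: HfG; rewrite eA eB; move: P; apply: key_dir => u v.
  exact: (proj1 (HF u v)).
Qed.
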